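(* Let $k>0$, $d\ge 0$, $a>0$. Suppose that for some $\lambda>0$ $$\frac{a}{k}>\left[1+\frac{k}{\frac{k\lambda}{\arctan(k\lambda)}-1}\right](1+d\lambda^2).$$ Then there exists a real number $\mu>0$ satisfying the dispersion relation $$\frac12\int_{-1}^{1}\frac{1-k+\mathrm{i}\,\frac{a\lambda s}{1+d\lambda^2}}{1+k\mu+\mathrm{i}k\lambda s}\,ds=1 .$$ Equivalently, the linearized system (L) has a nonzero solution $g(x,\mathbf v)=\hat g(\mathbf v)e^{\mathrm{i}\lambda x}$, $S_g=\hat Se^{\mathrm{i}\lambda x}$ with a real growth rate $\mu>0$. Consequently, if $a/k$ exceeds the infimum over $\lambda>0$ of the right-hand side above, then the constant state $f\equiv S\equiv 1$ of the kinetic chemotaxis system is linearly unstable. Moreover, the displayed inequality forces $\beta:=\frac{a}{k(1+d\lambda^2)}>1$, that is, $0<\lambda<\sqrt{(a/k-1)/d}$ when $d>0$.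
   Context: Let $S^2\subset\mathbb{R}^3$ be the unit sphere, with surface measure $d\Omega$ (total mass $4\pi$). Write $\mathbf{v}=(v_1,v_2,v_3)\in S^2$ and $x\in\mathbb{R}$. Fix parameters $k>0$ (scaled mean run time), $d\ge0$ (diffusion coefficient), and $a=F'(0)>0$ (stiffness of the chemotactic response function $F$ at $0$). The linearized system (L), for the unknowns $g(x,\mathbf v)$ and $S_g(x)$ and a growth rate $\mu\in\mathbb{C}$, is $$k\big(\mu g+v_1\partial_x g\big)=\rho_g+a\,v_1\partial_x S_g-g-k\rho_g,\qquad -d\,\partial_{xx}S_g+S_g=\rho_g,\qquad \rho_g(x)=\frac1{4\pi}\int_{S^2}g(x,\mathbf v)\,d\Omega(\mathbf v).$$ This system is the linearization, around the constant state $f\equiv S\equiv\rho\equiv1$ with perturbations proportional to $e^{\mu t}$, of the kinetic chemotaxis system $$\partial_t f+v_1\partial_x f=\frac1k\Big\{\frac1{4\pi}\int_{S^2}K[D_t\log S|_{\mathbf v'}]f(\mathbf v')\,d\Omega(\mathbf v')-K[D_t\log S|_{\mathbf v}]f(\mathbf v)\Big\}+P[\rho]f ,$$ $$-d\,\partial_{xx}S+S=\rho,\qquad \rho=\frac1{4\pi}\int_{S^2} f\,d\Omega .$$ Here: - $K[X]=1-F[X]$, where $F$ is smooth and increasing with $F(0)=0$ and $F(X)\to\pm\chi$ as $X\to\pm\infty$, for some $0\le\chi<1$; - $D_t X|_{\mathbf v}=\partial_t X+v_1\partial_x X$; - $P$ satisfies $P(1)=0$ and $P'(1)=-1$. ''Linearly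 unstable'' means that (L) has a nonzero solution of the form $\hat g(\mathbf v)e^{\mathrm{i}\lambda x}$ with $\mathrm{Re}\,\mu>0$. *)

(* Defs.v *)
From Stdlib Require Import Reals.
Open Scope R_scope.

Definition instab_rhs (k d lam : R) : R :=
  (1 + k / (k * lam / atan (k * lam) - 1)) * (1 + d * lam ^ 2).

(* The complex integrand of the dispersion relation,
     (1 - k + i * (a*lam*s/(1+d*lam^2))) / (1 + k*mu + i*k*lam*s),
   represented by its real and imaginary parts, computed with the literal
   complex division formula (p + i q)/(r + i t) = ((p r + q t) + i (q r - p t))/(r^2+t^2). *)
Definition disp_num_re (k : R) : R := 1 - k.
Definition disp_num_im (k d a lam s : R) : R := a * lam * s / (1 + d * lam ^ 2).
Definition disp_den_re (k mu : R) : R := 1 + k * mu.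
Definition disp_den_im (k lam s : R) : R := k * lam * s.

Definition disp_re (k d a lam mu : R) (s : R) : R :=
  (disp_num_re k * disp_den_re k mu + disp_num_im k d a lam s * disp_den_im k lam s)
  / (disp_den_re k mu ^ 2 + disp_den_im k lam s ^ 2).

Definition disp_im (k d a lam mu : R) (s : R) : R :=
  (disp_num_im k d a lam s * disp_den_re k mu - disp_num_re k * disp_den_im k lam s)
  / (disp_den_re k mu ^ 2 + disp_den_im k lam s ^ 2).

Definition dispersion_relation (k d a lam mu : R) : Prop :=
  (exists pr : Riemann_integrable (disp_re k d a lam mu) (-1) 1,
      / 2 * RiemannInt pr = 1) /\
  (exists pi : Riemann_integrable (disp_im k d a lam mu) (-1) 1,
      / 2 * RiemannInt pi = 0).

(* Main.v *)
Require Import Defs.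
From Stdlib Require Import Reals Lra Psatz Ranalysis5.
From Coquelicot Require Import Coquelicot.
Open Scope R_scope.

Lemma atan_bounds (y : R) : 0 < y -> y / (1 + y^2) < atan y < y.
Proof.
  intros Hy.
  destruct (MVT_cor2 atan (fun x => / (1 + x^2)) 0 y Hy) as [c [Heq Hc]].
  - intros x _. apply derivable_pt_lim_atan.
  - rewrite atan_0 in Heq.
    assert (H1 : atan y * (1 + c^2) = y).
    { rewrite Rminus_0_r in Heq. rewrite Heq. field. nra. }
    assert (Hp : 0 < atan y) by nra.
    split.
    + apply Rmult_lt_reg_r with (1 + y^2); [nra|].
      unfold Rdiv. rewrite Rmult_assoc, Rinv_l by nra. rewrite Rmult_1_r.
      assert (0 < atan y * (y^2 - c^2)) by (apply Rmult_lt_0_compat; nra). nra.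
    + assert (0 < atan y * c^2) by (apply Rmult_lt_0_compat; nra). nra.
Qed.

Definition Fr (k d a lam r : R) : R :=
  a / (k * (1 + d * lam ^ 2)) +
  ((1 - k) - a / (k * (1 + d * lam ^ 2)) * r) * atan (k * lam / r) / (k * lam).

Lemma re_int (k d a lam mu : R) (hk : 0 < k) (hd : 0 <= d) (hlam : 0 < lam)
  (hr : 0 < 1 + k * mu) :
  is_RInt (disp_re k d a lam mu) (-1) 1 (2 * Fr k d a lam (1 + k * mu)).
Proof.
  set (r := 1 + k * mu).
  set (D := 1 + d * lam ^ 2).
  assert (hD : 0 < D) by (unfold D; nra).
  set (b := a / (k * D)).
  set (G := fun s => b * s + ((1 - k) - b * r) / (k * lam) * atan (k * lam / r * s)).
  replace (2 * Fr k d a lam r) with (minus (G 1) (G (-1))).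
  2:{ unfold G, minus, plus, opp; simpl. replace (k * lam / r * 1) with (k * lam / r) by ring.
      replace (k * lam / r * -1) with (- (k * lam / r)) by ring.
      rewrite atan_opp. unfold Fr. fold D. fold b. unfold Rdiv. ring. }
  apply (is_RInt_derive G).
  - intros x _. unfold G. auto_derive; [easy|].
    unfold disp_re, disp_num_re, disp_num_im, disp_den_re, disp_den_im. fold r. fold D.
    unfold b. field. assert (0 < r) by exact hr. repeat split; try lra; nra.
  - intros x _. apply (@ex_derive_continuous R_AbsRing R_NormedModule).
    unfold disp_re, disp_num_re, disp_num_im, disp_den_re, disp_den_im.
    auto_derive. fold r. assert (0 < r) by exact hr. nra.
Qed.

Lemma im_int (k d a lam mu : R) (hk : 0 < k) (hd : 0 <= d) (hlam : 0 < lam)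
  (hr : 0 < 1 + k * mu) :
  is_RInt (disp_im k d a lam mu) (-1) 1 0.
Proof.
  set (r := 1 + k * mu).
  assert (hr' : 0 < r) by exact hr.
  set (D := 1 + d * lam ^ 2).
  assert (hD : 0 < D) by (unfold D; nra).
  set (m := a * lam * r / D - (1 - k) * (k * lam)).
  set (G := fun s => m / (2 * (k * lam) ^ 2) * ln (r ^ 2 + (k * lam) ^ 2 * s ^ 2)).
  replace 0 with (minus (G 1) (G (-1))).
  2:{ assert (HG : G (-1) = G 1) by (unfold G; f_equal; f_equal; ring).
      rewrite HG. unfold minus, plus, opp; simpl. ring. }
  apply (is_RInt_derive G).
  - intros x _. unfold G. auto_derive.
    + nra.
    + unfold disp_im, disp_num_re, disp_num_im, disp_den_re, disp_den_im. fold r. fold D.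
      unfold m. field. repeat split; try lra; nra.
  - intros x _. apply (@ex_derive_continuous R_AbsRing R_NormedModule).
    unfold disp_im, disp_num_re, disp_num_im, disp_den_re, disp_den_im.
    auto_derive. fold r. nra.
Qed.

Theorem mainTheorem2 (k d a lam : R)
  (hk : 0 < k) (hd : 0 <= d) (ha : 0 < a) (hlam : 0 < lam)
  (hcond : a / k > instab_rhs k d lam) :
  (exists mu : R, 0 < mu /\ dispersion_relation k d a lam mu) /\
  a / (k * (1 + d * lam ^ 2)) > 1 /\
  (0 < d -> lam < sqrt ((a / k - 1) / d)).
Proof.
  set (D := 1 + d * lam ^ 2).
  assert (hD : 0 < D) by (unfold D; nra).
  set (t := k * lam).
  assert (ht : 0 < t) by (unfold t; nra).
  set (X := atan t).
  destruct (atan_bounds t ht) as [HX1 HX2]. fold X in HX1, HX2.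
  assert (HX0 : 0 < X).
  { apply Rlt_trans with (t / (1 + t^2)); [|exact HX1].
    apply Rdiv_lt_0_compat; nra. }
  set (b := a / (k * D)).
  assert (HaD : a / k = b * D) by (unfold b; field; lra).
  assert (Hq : 0 < t / X - 1).
  { apply Rlt_Rminus. apply Rmult_lt_reg_r with X; [exact HX0|].
    unfold Rdiv. rewrite Rmult_assoc, Rinv_l by lra. lra. }
  assert (Hb1 : b > 1 + k / (t / X - 1)).
  { unfold instab_rhs in hcond. fold D t X in hcond. rewrite HaD in hcond.
    apply Rmult_lt_reg_r with D; [exact hD| exact hcond]. }
  assert (Hkq : 0 < k / (t / X - 1)) by (apply Rdiv_lt_0_compat; lra).
  assert (Hbt : (b - 1) * (t - X) > k * X).
  { assert (E : k / (t / X - 1) = k * X / (t - X)) by (field; split; lra).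
    rewrite E in Hb1.
    assert (b - 1 > k * X / (t - X)) by lra.
    apply Rmult_gt_compat_r with (r := t - X) in H; [|lra].
    unfold Rdiv in H. rewrite Rmult_assoc, Rinv_l in H by lra. lra. }
  assert (Hbgt1 : b > 1) by lra.
  split; [|split].
  - set (L := Rabs (1 - k)).
    assert (HL : 0 <= L) by apply Rabs_pos.
    set (R0 := 1 + L + b * t ^ 2).
    assert (HR1 : 1 < R0) by (unfold R0; nra).
    assert (HF1 : 1 < Fr k d a lam 1).
    { unfold Fr. fold D. fold b. fold t. rewrite Rdiv_1_r. fold X.
      apply Rmult_lt_reg_r with t; [exact ht|].
      unfold Rdiv. rewrite Rmult_plus_distr_r, (Rmult_assoc _ (/ t)), Rinv_l by lra.
      nra. }
    assert (HFR : Fr k d a lam R0 < 1).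
    { unfold Fr. fold D. fold b. fold t.
      set (A := atan (t / R0)).
      assert (Hu : 0 < t / R0) by (apply Rdiv_lt_0_compat; lra).
      destruct (atan_bounds (t / R0) Hu) as [HA1 HA2]. fold A in HA1, HA2.
      assert (P1 : A * R0 < t).
      { apply Rmult_lt_compat_r with (r := R0) in HA2; [|lra].
        unfold Rdiv in HA2. rewrite Rmult_assoc, Rinv_l, Rmult_1_r in HA2 by lra. exact HA2. }
      assert (P2 : A * (R0 ^ 2 + t ^ 2) > t * R0).
      { assert (E : t / R0 / (1 + (t / R0) ^ 2) = t * R0 / (R0 ^ 2 + t ^ 2))
          by (field; split; nra).
        rewrite E in HA1.
        apply Rmult_lt_compat_r with (r := R0 ^ 2 + t ^ 2) in HA1; [|nra].
        unfold Rdiv in HA1. rewrite Rmult_assoc, Rinv_l, Rmult_1_r in HA1 by nra. lra. }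
      assert (HA0 : 0 < A) by nra.
      assert (Q1 : (1 - k) * A <= L * A).
      { apply Rmult_le_compat_r; [lra|apply Rle_abs]. }
      assert (Q2 : L * A * R0 <= L * t) by nra.
      assert (Hnn : 0 <= b * t - b * R0 * A) by nra.
      assert (Q3' : b * R0 * (A * (R0 ^ 2 + t ^ 2)) > b * R0 * (t * R0)).
      { apply Rmult_gt_compat_l; [|exact P2]. apply Rmult_lt_0_compat; lra. }
      assert (Q3 : (b * t - b * R0 * A) * (R0 ^ 2 + t ^ 2) < b * t ^ 3) by nra.
      assert (Q4 : (b * t - b * R0 * A) * R0 ^ 2 <= (b * t - b * R0 * A) * (R0 ^ 2 + t ^ 2)).
      { assert (0 <= (b * t - b * R0 * A) * t ^ 2) by (apply Rmult_le_pos; nra). nra. }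
      assert (Q5 : (b * t - b * R0 * A) * R0 <= (b * t - b * R0 * A) * R0 ^ 2).
      { assert (0 <= (b * t - b * R0 * A) * (R0 * (R0 - 1))) by (apply Rmult_le_pos; nra). nra. }
      assert (Q6 : (b * t + (1 - k) * A - b * R0 * A) * R0 < t * R0).
      { assert (Lt : L * t + b * t ^ 3 = t * (R0 - 1)) by (unfold R0; ring). nra. }
      assert (Q7 : b * t + (1 - k) * A - b * R0 * A < t) by nra.
      apply Rmult_lt_reg_r with t; [exact ht|].
      unfold Rdiv. rewrite Rmult_plus_distr_r, (Rmult_assoc _ (/ t)), Rinv_l by lra.
      nra. }
    destruct (IVT_interv (fun r => 1 - Fr k d a lam r) 1 R0) as [z [Hz Hfz]].
    + intros r Hr. apply continuity_pt_filterlim.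
      apply (@ex_derive_continuous R_AbsRing R_NormedModule (fun r => 1 - Fr k d a lam r)).
      unfold Fr. auto_derive. repeat split; try lra; nra.
    + exact HR1.
    + lra.
    + lra.
    + assert (Hz1 : z <> 1) by (intro E; subst z; lra).
      assert (Hz' : 1 < z) by lra.
      exists ((z - 1) / k). split.
      { apply Rdiv_lt_0_compat; lra. }
      assert (Ez : 1 + k * ((z - 1) / k) = z) by (field; lra).
      assert (Hpos : 0 < 1 + k * ((z - 1) / k)) by lra.
      pose proof (re_int k d a lam ((z - 1) / k) hk hd hlam Hpos) as Hre.
      pose proof (im_int k d a lam ((z - 1) / k) hk hd hlam Hpos) as Him.
      rewrite Ez in Hre.
      split.
      * exists (ex_RInt_Reals_0 _ _ _ (ex_intro _ _ Hre)).
        rewrite <- RInt_Reals. rewrite (is_RInt_unique _ _ _ _ Hre). lra.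
      * exists (ex_RInt_Reals_0 _ _ _ (ex_intro _ _ Him)).
        rewrite <- RInt_Reals. rewrite (is_RInt_unique _ _ _ _ Him). lra.
  - exact Hbgt1.
  - intros hd0.
    assert (Hl2 : lam ^ 2 < (a / k - 1) / d).
    { rewrite HaD. apply Rmult_lt_reg_r with d; [exact hd0|].
      unfold Rdiv. rewrite Rmult_assoc, Rinv_l by lra. unfold D in *. nra. }
    rewrite <- (sqrt_pow2 lam) by lra.
    apply sqrt_lt_1_alt. split; [nra|exact Hl2].
Qed.
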